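(* Let $\Lambda$ be a finite-dimensional local algebra over an algebraically closed field $k$, and let $M$ be an indecomposable finitely generated $\Lambda$-module such that $\mathrm{End}_\Lambda(M)$ is quasi-Frobenius. Then $M/J(M)\simeq\mathrm{Soc}(M)\simeq k$, where $k$ denotes the unique simple $\Lambda$-module.
   Context: Quasi-Frobenius: the left regular module is injective. $J(M)$ is the radical and $\mathrm{Soc}(M)$ the socle of $M$. *)

(* Defs.v *)
From HB Require Import structures.
From mathcomp Require Import all_boot all_order all_algebra all_field.
From mathcomp Require Import boolp.

Set Implicit Arguments.
Unset Strict Implicit.
Unset Printing Implicit Defensive.
Import GRing.Theory.
Local Open Scope ring_scope.

(* Conventions:
   - Lambda is a finite-dimensional K-algebra  A : falgType K.
   - A finitely generated (= finite-dimensional) left A-module M of K-dimension n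
     is K^n = 'rV[K]_n with a . v := v *m rho a, where rho : A -> 'M[K]_n is
     K-linear, unital and anti-multiplicative (rho (a * b) = rho b *m rho a).
   - K-subspaces of M are row spaces of matrices (mxalgebra, %MS). *)

Section Modules.
Variables (K : fieldType) (A : falgType K).

Definition left_ideal (I : {vspace A}) : Prop :=
  forall a x : A, x \in I -> a * x \in I.

Definition maximal_left_ideal (I : {vspace A}) : Prop :=
  [/\ left_ideal I, (1 : A) \notin I &
      forall I' : {vspace A}, left_ideal I' -> (I <= I')%VS ->
        I' = I \/ (1 : A) \in I'].

Definition local_algebra : Prop :=
  exists I : {vspace A}, maximal_left_ideal I /\
    forall I' : {vspace A}, maximal_left_ideal I' -> I' = I.

Definition is_module (n : nat) (rho : A -> 'M[K]_n) : Prop :=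
  [/\ forall (c : K) (a b : A), rho (c *: a + b) = c *: rho a + rho b,
      rho 1 = 1%:M &
      forall a b : A, rho (a * b) = rho b *m rho a].

Variables (n : nat) (rho : A -> 'M[K]_n).
Local Notation O := (0 : 'M[K]_n).
Local Notation I := (1%:M : 'M[K]_n).

Definition submodule (U : 'M[K]_n) : Prop :=
  forall a : A, (U *m rho a <= U)%MS.

Definition indecomposable : Prop :=
  (0 < n)%N /\
  forall U V : 'M[K]_n, submodule U -> submodule V ->
    (U + V == I)%MS -> (U :&: V == O)%MS -> (U == O)%MS \/ (V == O)%MS.

Definition simple_module : Prop :=
  (0 < n)%N /\
  forall U : 'M[K]_n, submodule U -> (U == O)%MS \/ (U == I)%MS.

Definition maximal_submodule (U : 'M[K]_n) : Prop :=
  [/\ submodule U, ~~ (I <= U)%MS &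
      forall V : 'M[K]_n, submodule V -> (U <= V)%MS ->
        (V == U)%MS \/ (I <= V)%MS].

Definition simple_submodule (U : 'M[K]_n) : Prop :=
  [/\ submodule U, ~~ (U == O)%MS &
      forall V : 'M[K]_n, submodule V -> (V <= U)%MS ->
        (V == O)%MS \/ (V == U)%MS].

Definition is_radical (J : 'M[K]_n) : Prop :=
  forall v : 'rV[K]_n,
    (v <= J)%MS <-> (forall U, maximal_submodule U -> (v <= U)%MS).

Definition is_socle (S : 'M[K]_n) : Prop :=
  (forall U, simple_submodule U -> (U <= S)%MS) /\
  exists Us : seq 'M[K]_n,
    (forall U, U \in Us -> simple_submodule U) /\
    (S == \sum_(U <- Us) U)%MS.

Definition quotient_iso (J : 'M[K]_n) (m : nat) (sigma : A -> 'M[K]_m) : Prop :=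
  exists f : 'M[K]_(n, m),
    [/\ forall a : A, rho a *m f = f *m sigma a,
        row_full f & (kermx f == J)%MS].

(* the submodule U is isomorphic to (m, sigma): a module map defined on U,
   mapping U bijectively onto K^m *)
Definition submodule_iso (U : 'M[K]_n) (m : nat) (sigma : A -> 'M[K]_m) : Prop :=
  exists f : 'M[K]_(n, m),
    [/\ forall a : A, U *m (rho a *m f - f *m sigma a) = 0,
        \rank U = m & (U *m f == (1%:M : 'M[K]_m))%MS].

(* f : 'M_n represents the K-linear map v |-> v *m f; it is A-linear iff it
   commutes with every rho a. *)
Definition endo_pred : pred 'M[K]_n :=
  fun f => `[< forall a : A, rho a *m f = f *m rho a >].

Lemma endo_subring_closed : subring_closed endo_pred.
Proof.
split.
- by apply/asboolP => a; rewrite mulmx1 mul1mx.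
- move=> f g /asboolP Hf /asboolP Hg; apply/asboolP => a.
  by rewrite mulmxBr mulmxBl Hf Hg.
- move=> f g /asboolP Hf /asboolP Hg; apply/asboolP => a.
  by rewrite mulmxA Hf -mulmxA Hg mulmxA.
Qed.

Definition EndMx := {f : 'M[K]_n | endo_pred f}.
HB.instance Definition _ := [isSub of EndMx for @proj1_sig _ endo_pred].
HB.instance Definition _ := [Choice of EndMx by <:].
HB.instance Definition _ :=
  GRing.SubChoice_isSubPzRing.Build 'M[K]_n endo_pred EndMx endo_subring_closed.

End Modules.

(* Composition: (v |-> v f) o (v |-> v g) = (v |-> v *m (g *m f)), so
   End_A(M) (with composition as product) is the converse ring of EndMx. *)
Definition EndRing (K : fieldType) (A : falgType K) (n : nat)
  (rho : A -> 'M[K]_n) : pzRingType := (EndMx rho)^c.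

Definition injective_module (R : pzRingType) (Q : lmodType R) : Prop :=
  forall (U V : lmodType R) (i : {linear U -> V}), injective i ->
  forall f : {linear U -> Q},
    exists g : {linear V -> Q}, forall u : U, g (i u) = f u.

Definition quasi_Frobenius (R : pzRingType) : Prop :=
  injective_module (R^o : lmodType R).

(* Main.v *)
Require Import Defs.
From HB Require Import structures.
From mathcomp Require Import all_boot all_order all_algebra all_field.
From mathcomp Require Import boolp zify.
Set Implicit Arguments.
Unset Strict Implicit.
Unset Printing Implicit Defensive.
Import GRing.Theory.
Local Open Scope ring_scope.

Section Baer.
Variables (R : pzRingType) (x1 x2 z1 z2 : R).
Hypothesis Hxz : forall r1 r2 : R, r1 * x1 + r2 * x2 = 0 -> r1 * z1 + r2 * z2 = 0.

Definition Pb (x : R^o) : Prop := exists r : R * R, x = r.1 * x1 + r.2 * x2.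
Definition Pbb : pred R^o := fun x => `[< Pb x >].

Lemma Pbb_closed : subsemimod_closed Pbb.
Proof.
split; first split.
- by apply/asboolP; exists (0, 0); rewrite /= !mul0r addr0.
- move=> u v /asboolP [[a1 a2] ->] /asboolP [[b1 b2] ->]; apply/asboolP.
  by exists (a1 + b1, a2 + b2); rewrite /= !mulrDl addrACA.
- move=> a u /asboolP [[a1 a2] ->]; apply/asboolP.
  by exists (a * a1, a * a2); rewrite /= /GRing.scale /= mulrDr !mulrA.
Qed.

Definition Ub := {x : R^o | Pbb x}.
HB.instance Definition _ := [isSub of Ub for @proj1_sig _ Pbb].
HB.instance Definition _ := [Choice of Ub by <:].
HB.instance Definition _ := GRing.isSubmodClosed.Build R R^o Pbb Pbb_closed.
HB.instance Definition _ := [SubChoice_isSubLmodule of Ub by <:].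

Definition coefb (x : R) : R * R :=
  match pselect (Pb x) with
  | left H => projT1 (cid H)
  | right _ => (0, 0)
  end.

Lemma coefbP x r : x = r.1 * x1 + r.2 * x2 ->
  (coefb x).1 * z1 + (coefb x).2 * z2 = r.1 * z1 + r.2 * z2.
Proof.
move=> Hx; rewrite /coefb; case: pselect => [H|[]]; last by exists r.
case: (cid H) => [[c1 c2] /= Hc].
have E : (c1 - r.1) * x1 + (c2 - r.2) * x2 = 0.
  by rewrite !mulrBl addrACA -opprD -Hc -Hx subrr.
have := Hxz E; rewrite !mulrBl addrACA -opprD => /eqP; rewrite subr_eq0 => /eqP.
done.
Qed.

Definition phib (u : Ub) : R^o :=
  (coefb (val u)).1 * z1 + (coefb (val u)).2 * z2.

Lemma phib_linear : linear phib.
Proof.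
move=> a [u Pu] [v Pv]; rewrite /phib /=.
have /asboolP [[a1 a2] Hu] := Pu; have /asboolP [[b1 b2] Hv] := Pv.
rewrite (@coefbP _ (a * a1 + b1, a * a2 + b2)); last first.
  by rewrite /= Hu Hv /GRing.scale /= mulrDr !mulrA !mulrDl addrACA.
rewrite (coefbP Hu) (coefbP Hv) /= /GRing.scale /=.
by rewrite !mulrDl mulrDr !mulrA addrACA.
Qed.

HB.instance Definition _ := GRing.isLinear.Build R Ub R^o *:%R phib phib_linear.

Lemma baer_main : injective_module (R^o : lmodType R) ->
  exists c : R, z1 = x1 * c /\ z2 = x2 * c.
Proof.
move=> HQ.
have vlin : linear (val : Ub -> R^o) by move=> a u v.
pose vL : {linear Ub -> R^o} := HB.pack (val : Ub -> R^o) (GRing.isLinear.Build R Ub R^o *:%R _ vlin).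
have [g Hg] := HQ _ _ vL val_inj phib.
exists (g 1).
have gE (x : R) : g x = x * g 1.
  by rewrite -[in LHS](mulr1 x) -[x * 1]/(x *: (1 : R^o)) linearZ.
have H1 : Pbb x1 by apply/asboolP; exists (1, 0); rewrite /= mul1r mul0r addr0.
have H2 : Pbb x2 by apply/asboolP; exists (0, 1); rewrite /= mul1r mul0r add0r.
have key x (Hx : Pbb x) : g x = phib (exist _ x Hx) by exact: (Hg (exist _ x Hx)).
have phiE x (Hx : Pbb x) r : x = r.1 * x1 + r.2 * x2 -> phib (exist _ x Hx) = r.1 * z1 + r.2 * z2.
  by move=> E; rewrite /phib /= (coefbP E).
split.
- by rewrite -gE key (@phiE _ _ (1, 0)) /= ?mul1r ?mul0r ?addr0.
- by rewrite -gE key (@phiE _ _ (0, 1)) /= ?mul1r ?mul0r ?add0r.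
Qed.
End Baer.

Lemma rank_exp_stab (K : fieldType) (p : nat) (c : 'M[K]_p) :
  exists k, (k <= p)%N /\ \rank (c ^+ k.+1) = \rank (c ^+ k).
Proof.
have leS k : (\rank (c ^+ k.+1) <= \rank (c ^+ k))%N.
  by rewrite exprSr -mulmxE mxrankM_maxl.
apply: contrapT => Hn.
have H k : (k <= p.+1)%N -> (\rank (c ^+ k) + k <= p)%N.
  elim: k => [|k IH] Hk; first by rewrite expr0 mxrank1 addn0.
  have Hk' : (k <= p)%N by [].
  have : \rank (c ^+ k.+1) != \rank (c ^+ k).
    by apply/eqP => E; apply: Hn; exists k.
  have := leS k; have := IH (ltnW Hk); lia.
by have := H p.+1 (leqnn _); lia.
Qed.

Lemma exp_stab (K : fieldType) (p : nat) (c : 'M[K]_p) :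
  exists k, (k <= p)%N /\ forall j, (k <= j)%N -> (c ^+ j == c ^+ k)%MS.
Proof.
have [k [Hk E]] := rank_exp_stab c; exists k; split => // j.
move/subnK <-; elim: (j - k)%N => [|t IH]; first by rewrite add0n !submx_refl.
have S1 : (c ^+ k.+1 == c ^+ k)%MS.
  have sub : (c ^+ k.+1 <= c ^+ k)%MS by rewrite exprS -mulmxE submxMl.
  by rewrite -(mxrank_leqif_eq sub).2 E.
rewrite addSn exprSr -mulmxE.
apply/eqmxP; apply: eqmx_trans (eqmxMr _ (eqmxP IH)) _.
by rewrite mulmxE -exprSr; apply/eqmxP.
Qed.

Lemma unit_exp (K : fieldType) (p : nat) (c : 'M[K]_p) k :
  (0 < k)%N -> c ^+ k \in unitmx -> c \in unitmx.
Proof. by case: k => // k _; rewrite exprS -mulmxE unitmx_mul => /andP []. Qed.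

Lemma fitting (K : fieldType) (A : falgType K) (p : nat) (phi : A -> 'M[K]_p)
  (Hind : indecomposable phi) (c : 'M[K]_p) :
  (forall a, phi a *m c = c *m phi a) -> c \in unitmx \/ c ^+ p = 0.
Proof.
move=> Hc.
case: Hind => p0 Hind.
have [k [Hk Hst]] := exp_stab c.
set Q := c ^+ p.
have Qk : (Q == c ^+ k)%MS by apply: Hst.
have QQk : (Q *m Q == c ^+ k)%MS by rewrite mulmxE -exprD; apply: Hst; lia.
have rQ : \rank (Q *m Q) = \rank Q by rewrite (eqmx_rank QQk) (eqmx_rank Qk).
have commX j a : phi a *m c ^+ j = c ^+ j *m phi a.
  elim: j => [|j IH]; first by rewrite expr0 mulmx1 mul1mx.
  by rewrite exprS -mulmxE !mulmxA Hc -!mulmxA IH.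
set U := kermx Q.
have subU : submodule phi U.
  move=> a; apply/sub_kermxP; rewrite -mulmxA commX mulmxA mulmx_ker mul0mx //.
have subV : submodule phi Q.
  by move=> a; rewrite -commX submxMl.
have kerQQ : (kermx (Q *m Q) <= U)%MS.
  have s : (U <= kermx (Q *m Q))%MS by apply/sub_kermxP; rewrite mulmxA mulmx_ker mul0mx.
  by rewrite -(mxrank_leqif_sup s).2 !mxrank_ker rQ.
have cap0 : (U :&: Q)%MS = 0.
  apply: submx0null.
  have /submxP [D HD] : ((U :&: Q)%MS <= Q)%MS by apply: capmxSr.
  have HU : ((U :&: Q)%MS <= U)%MS by apply: capmxSl.
  have : (D <= U)%MS.
    apply: submx_trans kerQQ; apply/sub_kermxP.
    by rewrite mulmxA -HD; apply/sub_kermxP.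
  by move=> /sub_kermxP DQ; rewrite HD DQ.
have [U0|V0] : (U == (0 : 'M[K]_p))%MS \/ (Q == (0 : 'M[K]_p))%MS.
  apply: (Hind U Q subU subV); last by rewrite cap0 !submx_refl.
  rewrite submx1 sub1mx /row_full mxrank_disjoint_sum // mxrank_ker subnK //.
  by rewrite eqxx. exact: rank_leq_row.
- left; move: U0 => /andP [/submx0null U0 _].
  have : Q \in unitmx by rewrite -row_free_unit -kermx_eq0 -/U U0.
  by apply: unit_exp.
- by right; move: V0 => /andP [/submx0null].
Qed.

Lemma vbasis_nth_mem (K : fieldType) (vT : vectType K) (U : {vspace vT}) (k : 'I_(\dim U)) :
  (vbasis U)`_k \in U.
Proof. by apply: vbasis_mem; apply: memt_nth. Qed.

Lemma engel (K : fieldType) (n : nat) (N : {vspace 'M[K]_n}) :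
  (forall x y, x \in N -> y \in N -> x *m y \in N) ->
  (forall x (w : 'rV[K]_n), x \in N -> w *m x = w -> w = 0) ->
  forall p (W : 'M[K]_(p, n)), W != 0 ->
  (forall x, x \in N -> (W *m x <= W)%MS) ->
  exists w : 'rV[K]_n, [/\ (w <= W)%MS, w != 0 & forall x, x \in N -> w *m x = 0].
Proof.
move=> HN Hfix p W.
have [r] := ubnP (\rank W); elim: r p W => // r IH p W Hlt HW0 Hinv.
have [i Hi] : exists i, row i W != 0.
  apply/existsP; apply: contraR HW0 => /existsPn H.
  by apply/eqP/row_matrixP => i; rewrite row0; apply/eqP/negbNE/H.
set w0 := row i W.
pose wN := \matrix_(k < \dim N) (w0 *m (vbasis N)`_k).
have memwN x : x \in N -> (w0 *m x <= wN)%MS.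
  move=> Hx; rewrite (coord_vbasis Hx) mulmx_sumr.
  apply: summx_sub => k _; rewrite -scalemxAr; apply: scalemx_sub.
  by rewrite -(rowK (fun k => w0 *m (vbasis N)`_k)) row_sub.
have wNmem (v : 'rV_n) : (v <= wN)%MS -> exists2 x, x \in N & v = w0 *m x.
  move=> /submxP [D ->]; rewrite mulmx_sum_row.
  exists (\sum_k D 0 k *: (vbasis N)`_k).
    by apply: memv_suml => k _; rewrite memvZ // vbasis_nth_mem.
  rewrite mulmx_sumr; apply: eq_bigr => k _.
  by rewrite rowK scalemxAr.
have w0W : (w0 <= W)%MS by apply: row_sub.
have wNW : (wN <= W)%MS.
  apply/row_subP => k; rewrite rowK.
  exact: submx_trans (submxMr _ w0W) (Hinv _ (vbasis_nth_mem k)).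
have wNinv x : x \in N -> (wN *m x <= wN)%MS.
  move=> Hx; apply/row_subP => k; rewrite row_mul rowK -mulmxA.
  by apply: memwN; apply: HN => //; apply: vbasis_nth_mem.
have [wN0|wNn0] := eqVneq wN 0.
  exists w0; split => // x Hx; have := memwN _ Hx; rewrite wN0; exact: submx0null.
have [lt_r|ge_r] := ltnP (\rank wN) (\rank W).
  have [w [w1 w2 w3]] := IH _ wN (leq_trans lt_r (ltnSE Hlt)) wNn0 wNinv.
  by exists w; split => //; apply: submx_trans wNW.
have : (W <= wN)%MS by rewrite -(mxrank_leqif_sup wNW).2 eqn_leq ge_r andbT mxrankS.
move=> /(submx_trans w0W) /wNmem [x Hx E].
by move: Hi; rewrite -/w0 (Hfix x w0 Hx (esym E)) eqxx.
Qed.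

Section LocalAlg.
Variables (K : closedFieldType) (A : falgType K).
Variable I : {vspace A}.
Hypothesis HI : maximal_left_ideal I.
Hypothesis Huniq : forall I', maximal_left_ideal I' -> I' = I.

Lemma exists_max (L : {vspace A}) : left_ideal L -> (1 : A) \notin L ->
  exists I', maximal_left_ideal I' /\ (L <= I')%VS.
Proof.
have [r] := ubnP (\dim (fullv : {vspace A}) - \dim L).
elim: r L => // r IH L Hr HL H1.
have [Hmax|Hn] := pselect (maximal_left_ideal L); first by exists L.
have : ~ (forall I', left_ideal I' -> (L <= I')%VS -> I' = L \/ (1:A) \in I').
  by move=> H; apply: Hn; split.
move=> /existsNP [I' /not_implyP [HI' /not_implyP [LI' /not_orP [NE N1]]]].
have N1' : (1:A) \notin I' by apply/negP.
have [I'' [H1' H2']] : exists I'', maximal_left_ideal I'' /\ (I' <= I'')%VS.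
  apply: (IH I') => //.
  have lt : (\dim L < \dim I')%N.
    rewrite ltn_neqAle (dimv_leqif_eq LI').2 dimvS // andbT.
    by apply/negP => /eqP E; apply: NE.
  have le : (\dim I' <= \dim (fullv : {vspace A}))%N by apply: dimvS; apply: subvf.
  apply: leq_trans (ltnSE Hr); apply: ltn_sub2l => //; exact: leq_trans lt le.
by exists I''; split => //; apply: subv_trans H2'.
Qed.

Lemma left_inv (a : A) : a \notin I -> exists b, b * a = 1.
Proof.
move=> Ha.
pose L := limg (amulr a).
have memL x : x \in L <-> exists b, x = b * a.
  split; first by move=> /memv_imgP [b _ ->]; exists b; rewrite lfunE.
  move=> [b ->]; have -> : b * a = amulr a b by rewrite lfunE.
  by apply: memv_img; apply: memvf.
have HL : left_ideal L.
  move=> c x /memL [b ->]; apply/memL; exists (c * b); by rewrite mulrA.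
have [H1|H1] := boolP ((1 : A) \in L); first by have /memL [b ->] := H1; exists b.
have [I' [HI' LI']] := exists_max HL H1.
rewrite (Huniq HI') in LI'.
suff : a \in L by move=> /(subvP LI'); rewrite (negbTE Ha).
by apply/memL; exists 1; rewrite mul1r.
Qed.

Section Lin.
Variables (p q : nat) (psi : A -> 'M[K]_(p, q)).
Hypothesis psiL : forall c a b, psi (c *: a + b) = c *: psi a + psi b.

Lemma psi0 : psi 0 = 0.
Proof.
have H := psiL 1 0 0; rewrite !scale1r addr0 in H.
by apply: (addIr (psi 0)); rewrite add0r -H.
Qed.
Lemma psiD a b : psi (a + b) = psi a + psi b.
Proof. by have := psiL 1 a b; rewrite !scale1r. Qed.
Lemma psiZ c a : psi (c *: a) = c *: psi a.
Proof. by have := psiL c a 0; rewrite !addr0 psi0 addr0. Qed.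
Lemma psiN a : psi (- a) = - psi a.
Proof. by rewrite -scaleN1r psiZ scaleN1r. Qed.
Lemma psiB a b : psi (a - b) = psi a - psi b.
Proof. by rewrite psiD psiN. Qed.
Lemma psi_sum d (c : 'I_d -> K) (F : 'I_d -> A) :
  psi (\sum_k c k *: F k) = \sum_k c k *: psi (F k).
Proof.
apply: (big_ind2 (fun x y => psi x = y)) => //; first exact: psi0.
  by move=> x1 x2 y1 y2 <- <-; rewrite psiD.
by move=> k _; rewrite psiZ.
Qed.

Definition NA : {vspace 'M[K]_(p, q)} :=
  <<mktuple (fun k : 'I_(\dim I) => psi (vbasis I)`_k)>>%VS.

Lemma memNA x : x \in NA <-> exists2 i, i \in I & x = psi i.
Proof.
split.
  move=> /coord_span ->; exists (\sum_k coord (mktuple (fun k : 'I_(\dim I) => psi (vbasis I)`_k)) k x *: (vbasis I)`_k).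
    by apply: memv_suml => k _; rewrite memvZ // vbasis_nth_mem.
  rewrite psi_sum; apply: eq_bigr => k _; by rewrite nth_mktuple.
move=> [i Hi ->]; rewrite (coord_vbasis Hi) psi_sum.
apply: memv_suml => k _; rewrite memvZ //.
by apply: memv_span; rewrite -(nth_mktuple (fun k : 'I_(\dim I) => psi (vbasis I)`_k) 0 k); apply: mem_nth; rewrite size_tuple.
Qed.
End Lin.


Section Mod.
Variables (p : nat) (phi : A -> 'M[K]_p).
Hypothesis Hphi : is_module phi.

Let phiL : forall c a b, phi (c *: a + b) = c *: phi a + phi b.
Proof. by case: Hphi. Qed.
Let phi1 : phi 1 = 1%:M.
Proof. by case: Hphi. Qed.
Let phiM : forall a b, phi (a * b) = phi b *m phi a.
Proof. by case: Hphi. Qed.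

Lemma phi_unit a b : b * a = 1 -> phi a \in unitmx.
Proof. by move=> E; have := phiM b a; rewrite E phi1 => /esym /mulmx1_unit []. Qed.

Lemma one_notin : (1 : A) \notin I.
Proof. by case: HI. Qed.

Lemma unit_sub1 i : i \in I -> phi (1 - i) \in unitmx.
Proof.
move=> Hi; have : 1 - i \notin I.
  apply: contra one_notin => H; by rewrite -(subrK i 1) memvD.
by move=> /left_inv [b Hb]; exact: phi_unit Hb.
Qed.

Lemma phi_sub1 i : phi (1 - i) = 1%:M - phi i.
Proof. by rewrite (psiB phiL) phi1. Qed.

Lemma nofix_row i (w : 'rV[K]_p) : i \in I -> w *m phi i = w -> w = 0.
Proof.
move=> Hi E; have U := unit_sub1 Hi.
have : w *m phi (1 - i) = 0 by rewrite phi_sub1 mulmxBr mulmx1 E subrr.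
by move=> /(congr1 (mulmx^~ (invmx (phi (1 - i))))); rewrite mulmxK // mul0mx.
Qed.

Lemma nofix_col i (f : 'cV[K]_p) : i \in I -> phi i *m f = f -> f = 0.
Proof.
move=> Hi E; have U := unit_sub1 Hi.
have : phi (1 - i) *m f = 0 by rewrite phi_sub1 mulmxBl mul1mx E subrr.
by move=> /(congr1 (mulmx (invmx (phi (1 - i))))); rewrite mulKmx // mulmx0.
Qed.


Lemma phi_split a l : phi a = l *: 1%:M + phi (a - l *: 1).
Proof. by rewrite -phi1 -phiL addrC subrK. Qed.

Lemma soc_act (w : 'rV[K]_p) a l : (forall i, i \in I -> w *m phi i = 0) ->
  a - l *: 1 \in I -> w *m phi a = l *: w.
Proof. by move=> Hw Ha; rewrite (phi_split a l) mulmxDr Hw // addr0 scalemx1 mul_mx_scalar. Qed.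

Lemma top_act (f : 'cV[K]_p) a l : (forall i, i \in I -> phi i *m f = 0) ->
  a - l *: 1 \in I -> phi a *m f = l *: f.
Proof. by move=> Hf Ha; rewrite (phi_split a l) mulmxDl Hf // addr0 scalemx1 mul_scalar_mx. Qed.

Lemma left_id_I a x : x \in I -> a * x \in I.
Proof. by case: HI => H _ _; apply: H. Qed.

Lemma soc_exists q (W : 'M[K]_(q, p)) : W != 0 -> (forall a, (W *m phi a <= W)%MS) ->
  exists w : 'rV[K]_p, [/\ (w <= W)%MS, w != 0 & forall i, i \in I -> w *m phi i = 0].
Proof.
move=> W0 HW.
have := @engel _ _ (NA phi) _ _ _ W W0.
case.
- move=> x y /(memNA phiL) [i Hi ->] /(memNA phiL) [j Hj ->].
  by apply/(memNA phiL); exists (j * i); rewrite ?left_id_I // phiM.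
- by move=> x w /(memNA phiL) [i Hi ->]; apply: nofix_row.
- by move=> x /(memNA phiL) [i Hi ->].
move=> w [w1 w2 w3]; exists w; split => // i Hi; apply: w3; apply/(memNA phiL); by exists i.
Qed.

Lemma top_exists q (U : 'M[K]_(q, p)) : (forall a, (U *m phi a <= U)%MS) -> (\rank U < p)%N ->
  exists f : 'cV[K]_p, [/\ f != 0, U *m f = 0 & forall i, i \in I -> phi i *m f = 0].
Proof.
move=> HU Hr.
pose psiT := fun a => (phi a)^T.
have psiTL : forall c a b, psiT (c *: a + b) = c *: psiT a + psiT b.
  by move=> c a b; rewrite /psiT phiL linearP.
pose W := kermx U^T.
have W0 : W != 0.
  by rewrite -mxrank_eq0 mxrank_ker mxrank_tr -lt0n subn_gt0.
have := @engel _ _ (NA psiT) _ _ _ W W0.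
case.
- move=> x y /(memNA psiTL) [i Hi ->] /(memNA psiTL) [j Hj ->].
  apply/(memNA psiTL); exists (i * j); rewrite ?left_id_I //.
  by rewrite /psiT phiM trmx_mul.
- move=> x w /(memNA psiTL) [i Hi ->] E.
  apply: trmx_inj; rewrite trmx0; apply: (nofix_col Hi).
  by rewrite -[phi i]trmxK -trmx_mul E.
- move=> x /(memNA psiTL) [i Hi ->]; apply/sub_kermxP.
  have /submxP [D HD] := HU i.
  by rewrite /psiT -mulmxA -trmx_mul HD trmx_mul mulmxA mulmx_ker mul0mx.
move=> w [w1 w2 w3]; exists w^T; split.
- by apply: contra w2 => /eqP E; rewrite -(trmxK w) E trmx0.
- by rewrite -[U]trmxK -trmx_mul (sub_kermxP w1) trmx0.
- move=> i Hi; rewrite -[phi i]trmxK -trmx_mul.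
  have -> : w *m (phi i)^T = 0 by apply: w3; apply/(memNA psiTL); exists i.
  by rewrite trmx0.
Qed.
End Mod.

Lemma decomp_of p (phi : A -> 'M[K]_p) (Hphi : is_module phi) (a : A) : (0 < p)%N -> exists l, a - l *: 1 \in I.
Proof.
case: p phi Hphi => // p' phi' Hphi' _.
have [phiL' phi1' phiM'] := Hphi'.
have [l Hl] : exists l, eigenvalue (phi' a) l.
  have /closed_rootP [l Hl] : size (char_poly (phi' a)) != 1 by rewrite size_char_poly.
  by exists l; rewrite eigenvalue_root_char.
exists l; apply: contraT => /left_inv [b Hb].
have U := phi_unit Hphi' Hb.
move: Hl => /eigenvalueP [v Hv vn0].
have : v *m phi' (a - l *: 1) = 0.
  by rewrite (psiB phiL') (psiZ phiL') phi1' mulmxBr Hv scalemx1 mul_mx_scalar subrr.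
by move=> /(congr1 (mulmx^~ (invmx (phi' (a - l *: 1))))); rewrite mulmxK // mul0mx => E; rewrite E eqxx in vn0.
Qed.

End LocalAlg.

From mathcomp Require Import ring.

Section Main.
Variables (K : closedFieldType) (A : falgType K).
Variable I : {vspace A}.
Hypothesis HI : maximal_left_ideal I.
Hypothesis Huniq : forall I', maximal_left_ideal I' -> I' = I.
Variables (n : nat) (rho : A -> 'M[K]_n).
Hypothesis Hrho : is_module rho.
Hypothesis Hind : indecomposable rho.
Hypothesis HQF : quasi_Frobenius (EndRing rho).

Let rhoL : forall c a b, rho (c *: a + b) = c *: rho a + rho b.
Proof. by case: Hrho. Qed.
Let rhoM : forall a b, rho (a * b) = rho b *m rho a.
Proof. by case: Hrho. Qed.

Lemma n_gt0 : (0 < n)%N.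
Proof. by case: Hind. Qed.

Definition endo (X : 'M[K]_n) := forall a, rho a *m X = X *m rho a.
Definition Tst (f : 'cV[K]_n) := forall i, i \in I -> rho i *m f = 0.
Definition Soc (s : 'rV[K]_n) := forall i, i \in I -> s *m rho i = 0.

Definition valR (x : EndRing rho) : 'M[K]_n := val (x : EndMx rho).
Lemma valR_mul x y : valR (x * y) = valR y *m valR x.
Proof. by rewrite /valR /= mulmxE. Qed.
Lemma valR_add x y : valR (x + y) = valR x + valR y.
Proof. by []. Qed.
Lemma valR0 : valR 0 = 0.
Proof. by []. Qed.
Lemma valR_inj : injective valR.
Proof. exact: val_inj. Qed.
Lemma valR_endo x : endo (valR x).
Proof. case: x => X HX; rewrite /valR /=; move: HX; rewrite /endo_pred /= => /asboolP; done. Qed.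
Definition mkE (X : 'M[K]_n) (H : endo X) : EndRing rho :=
  (Sub X (asboolT H) : EndMx rho).
Lemma valR_mkE X H : valR (@mkE X H) = X.
Proof. by rewrite /valR /mkE SubK. Qed.

Lemma decomp a : exists l, a - l *: 1 \in I.
Proof. exact: (decomp_of Huniq Hrho a n_gt0). Qed.

Lemma endo_T f X : Tst f -> endo X -> Tst (X *m f).
Proof. by move=> Hf HX i Hi; rewrite mulmxA HX -mulmxA Hf // mulmx0. Qed.
Lemma endo_S s X : Soc s -> endo X -> Soc (s *m X).
Proof. by move=> Hs HX i Hi; rewrite -mulmxA -HX mulmxA Hs // mul0mx. Qed.

Lemma mk_endo f s : Tst f -> Soc s -> endo (f *m s).
Proof.
move=> Hf Hs a; have [l Hl] := decomp a.
by rewrite mulmxA (top_act Hrho Hf Hl) -mulmxA (soc_act Hrho Hs Hl) -scalemxAl scalemxAr.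
Qed.

Lemma nz_entry_r (s : 'rV[K]_n) : s != 0 -> exists j, s 0 j != 0.
Proof.
move=> H; apply: contrapT => Hn; apply: (elimN eqP H); apply/matrixP => i j.
rewrite ord1 mxE; apply/eqP; apply: contrapT => Hj; apply: Hn; exists j; exact/negP.
Qed.
Lemma nz_entry_c (f : 'cV[K]_n) : f != 0 -> exists i, f i 0 != 0.
Proof.
move=> H; apply: contrapT => Hn; apply: (elimN eqP H); apply/matrixP => i j.
rewrite ord1 mxE; apply/eqP; apply: contrapT => Hj; apply: Hn; exists i; exact/negP.
Qed.

Lemma cancel_r (X Y : 'cV[K]_n) (s : 'rV[K]_n) : s != 0 -> X *m s = Y *m s -> X = Y.
Proof.
move=> /nz_entry_r [j Hj] E; apply/matrixP => i k; rewrite ord1.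
have := congr1 (fun M : 'M[K]_(_,_) => M i j) E; rewrite !mxE !big_ord1; exact: mulIf.
Qed.
Lemma cancel_l (f : 'cV[K]_n) (u v : 'rV[K]_n) : f != 0 -> f *m u = f *m v -> u = v.
Proof.
move=> /nz_entry_c [i Hi] E; apply/matrixP => k j; rewrite ord1.
have := congr1 (fun M : 'M[K]_(_,_) => M i j) E; rewrite !mxE !big_ord1; exact: mulfI.
Qed.

Lemma T_exists : exists f, f != 0 /\ Tst f.
Proof.
have [f [f1 _ f3]] := top_exists HI Huniq Hrho (U := (0 : 'M[K]_n)) (fun a => ltac:(by rewrite mul0mx sub0mx)) ltac:(by rewrite mxrank0 n_gt0).
by exists f.
Qed.

Lemma S_exists : exists s, s != 0 /\ Soc s.
Proof.
have H0 : (1%:M : 'M[K]_n) != 0 by rewrite -mxrank_eq0 mxrank1 -lt0n n_gt0.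
have [s [_ s2 s3]] := soc_exists HI Huniq Hrho H0 (fun a => submx1 _).
by exists s.
Qed.

Lemma exp_mul_col (X : 'M[K]_n) (f : 'cV[K]_n) mu k : X *m f = mu *: f -> X ^+ k *m f = mu ^+ k *: f.
Proof.
move=> E; elim: k => [|k IH]; first by rewrite !expr0 scale1r; exact: mul1mx.
by rewrite [X ^+ _]exprS -mulmxE -mulmxA IH -scalemxAr E scalerA -exprSr.
Qed.
Lemma exp_mul_row (X : 'M[K]_n) (w : 'rV[K]_n) k : w *m X = w -> w *m X ^+ k = w.
Proof.
move=> E; elim: k => [|k IH]; first by rewrite expr0; exact: mulmx1.
by rewrite exprSr -mulmxE mulmxA IH E.
Qed.


Lemma topdim f1 f2 : Tst f1 -> Tst f2 -> f1 != 0 -> exists mu, f2 = mu *: f1.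
Proof.
move=> T1 T2 nz1; apply: contrapT => Hn.
have nz2 : f2 != 0 by apply/eqP => E; apply: Hn; exists 0; rewrite E scale0r.
have indep (t1 t2 : 'rV[K]_n) : f1 *m t1 + f2 *m t2 = 0 -> t1 = 0 /\ t2 = 0.
  move=> E.
  have t20 : t2 = 0.
    apply: contrapT => /eqP /nz_entry_r [j Hj]; apply: Hn.
    exists (- (t1 0 j) / t2 0 j); apply/matrixP => i k; rewrite ord1.
    have := congr1 (fun M : 'M[K]_(_,_) => M i j) E; rewrite !mxE !big_ord1 => /eqP.
    rewrite addr_eq0 => /eqP E'.
    have E2 : f2 i 0 * t2 0 j = - (f1 i 0 * t1 0 j) by rewrite E' opprK.
    apply: (mulIf Hj); rewrite E2; field; exact: Hj.
  split => //; move: E; rewrite t20 mulmx0 addr0 => E.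
  by apply: (cancel_l nz1); rewrite E mulmx0.
have [s0 [s0nz Ss0]] := S_exists.
pose x1 := mkE (mk_endo T1 Ss0); pose x2 := mkE (mk_endo T2 Ss0).
have Hyp : forall r1 r2 : EndRing rho, r1 * x1 + r2 * x2 = 0 -> r1 * x1 + r2 * 0 = 0.
  move=> r1 r2 /(congr1 valR); rewrite valR_add !valR_mul !valR_mkE valR0 => E.
  have [E1 _] := indep (s0 *m valR r1) (s0 *m valR r2) ltac:(by rewrite !mulmxA).
  apply: valR_inj; rewrite valR_add !valR_mul valR_mkE valR0 mul0mx addr0 -mulmxA E1 mulmx0 //.
have [c [c1 c2]] := baer_main Hyp HQF.
have Ec1 : valR c *m f1 = f1.
  apply: (cancel_r s0nz); move: (congr1 valR c1); rewrite valR_mul valR_mkE mulmxA => E.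
  by rewrite -E.
have Ec2 : valR c *m f2 = 0.
  apply: (cancel_r s0nz); move: (congr1 valR c2); rewrite valR_mul valR_mkE valR0 mulmxA => E.
  by rewrite -E mul0mx.
case: (fitting Hind (valR_endo c)) => [U|N].
  by move: nz2; rewrite -(mulKmx U f2) Ec2 mulmx0 eqxx.
have : valR c ^+ n *m f1 = 1 ^+ n *: f1 by apply: exp_mul_col; rewrite scale1r.
by rewrite N mul0mx expr1n scale1r => E; move: nz1; rewrite -E eqxx.
Qed.

Lemma dich f X : Tst f -> f != 0 -> endo X -> X \in unitmx \/ X *m f = 0.
Proof.
move=> Tf nzf HX; case: (fitting Hind HX) => [U|N]; first by left.
right; have [mu Emu] := topdim Tf (endo_T Tf HX) nzf.
have := exp_mul_col n Emu; rewrite N mul0mx => /esym /eqP.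
rewrite scaler_eq0 (negbTE nzf) orbF expf_eq0 n_gt0 /= => /eqP mu0.
by rewrite Emu mu0 scale0r.
Qed.

Definition NE (f : 'cV[K]_n) : {vspace 'M[K]_n} :=
  (lker (linfun (mulmxr f)) :&: \bigcap_(k < \dim (fullv : {vspace A}))
    lker (linfun (mulmx (rho (vbasis fullv)`_k)) - linfun (mulmxr (rho (vbasis fullv)`_k))))%VS.

Lemma rho_span (a : A) (V : {vspace A}) : a \in V ->
  rho a = \sum_(k < \dim V) coord (vbasis V) k a *: rho (vbasis V)`_k.
Proof. by move=> Ha; rewrite {1}(coord_vbasis Ha) (psi_sum rhoL). Qed.

Lemma memNE f X : X \in NE f <-> endo X /\ X *m f = 0.
Proof.
split.
- rewrite memv_cap => /andP [H1 H2]; split; last first.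
    by move: H1; rewrite memv_ker lfunE /= => /eqP.
  move=> a; rewrite (rho_span (memvf a)) mulmx_suml mulmx_sumr.
  apply: eq_bigr => k _; rewrite -scalemxAl -scalemxAr; congr (_ *: _).
  move: H2; rewrite memvE => /subv_bigcapP /(_ k isT); rewrite -memvE memv_ker.
  by rewrite add_lfunE opp_lfunE !lfunE /= subr_eq0 => /eqP.
- move=> [HX Xf]; rewrite memv_cap; apply/andP; split.
    by rewrite memv_ker lfunE /= Xf.
  rewrite memvE; apply/subv_bigcapP => k _; rewrite -memvE memv_ker.
  by rewrite add_lfunE opp_lfunE !lfunE /= HX subrr.
Qed.

Definition Wsoc : 'M[K]_n := (\bigcap_(k < \dim I) kermx (rho (vbasis I)`_k))%MS.

Lemma memW (s : 'rV[K]_n) : (s <= Wsoc)%MS <-> Soc s.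
Proof.
split.
- move=> /sub_bigcapmxP H i Hi; rewrite (rho_span Hi) mulmx_sumr big1 // => k _.
  by rewrite -scalemxAr (sub_kermxP (H k isT)) scaler0.
- move=> Hs; apply/sub_bigcapmxP => k _; apply/sub_kermxP; apply: Hs.
  exact: vbasis_nth_mem.
Qed.

Lemma soc_gen f : Tst f -> f != 0 ->
  exists sS, [/\ Soc sS, sS != 0 & forall X, endo X -> X *m f = 0 -> sS *m X = 0].
Proof.
move=> Tf nzf.
have [s0 [nz0 S0]] := S_exists.
have W0 : Wsoc != 0.
  apply: contra nz0 => /eqP W0; have := (memW s0).2 S0; rewrite W0 => /submx0null ->.
  by rewrite eqxx.
have := @engel _ _ (NE f) _ _ _ Wsoc W0; case.
- move=> X Y /memNE [HX Xf] /memNE [HY Yf]; apply/memNE; split.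
    by move=> a; rewrite mulmxA HX -mulmxA HY mulmxA.
  by rewrite -mulmxA Yf mulmx0.
- move=> X w /memNE [HX Xf] E.
  case: (fitting Hind HX) => [U|N].
    by move: nzf; rewrite -(mulKmx U f) Xf mulmx0 eqxx.
  by rewrite -(exp_mul_row n E) N mulmx0.
- move=> X /memNE [HX Xf]; apply/row_subP => i; rewrite row_mul.
  apply/memW; apply: endo_S HX; apply/memW; exact: row_sub.
move=> w [w1 w2 w3]; exists w; split => //; first exact/memW.
by move=> X HX Xf; apply: w3; apply/memNE.
Qed.

Lemma socdim f sS s : Tst f -> f != 0 -> Soc sS -> sS != 0 ->
  (forall X, endo X -> X *m f = 0 -> sS *m X = 0) -> Soc s -> exists mu, s = mu *: sS.
Proof.
move=> Tf nzf SS nzS HS Ss.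
have [->|nzs] := eqVneq s 0; first by exists 0; rewrite scale0r.
pose y := mkE (mk_endo Tf Ss); pose z := mkE (mk_endo Tf SS).
have Hyp : forall r1 r2 : EndRing rho, r1 * y + r2 * 0 = 0 -> r1 * z + r2 * 0 = 0.
  move=> r1 r2 /(congr1 valR); rewrite !valR_add !valR_mul !valR_mkE !valR0 mul0mx addr0 => E.
  have E1 : s *m valR r1 = 0 by apply: (cancel_l nzf); rewrite mulmxA E mulmx0.
  apply: valR_inj; rewrite valR_add !valR_mul valR_mkE valR0 mul0mx addr0 -mulmxA.
  case: (dich Tf nzf (valR_endo r1)) => [U|F0].
    by move: nzs; rewrite -(mulmxK U s) E1 mul0mx eqxx.
  by rewrite HS ?mulmx0 //; apply: valR_endo.
have [c [c1 _]] := baer_main Hyp HQF.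
have [mu Emu] := topdim Tf (endo_T Tf (valR_endo c)) nzf.
have E : sS = mu *: s.
  apply: (cancel_l nzf); move: (congr1 valR c1); rewrite valR_mul !valR_mkE mulmxA Emu => ->.
  by rewrite -scalemxAl scalemxAr.
have mu0 : mu != 0 by apply: contra nzS => /eqP mu0; rewrite E mu0 scale0r.
by exists mu^-1; rewrite E scalerA mulVf // scale1r.
Qed.

Definition line p (v : 'rV[K]_p) : 'M[K]_p := \matrix_(i < p) v.
Lemma line_sub p (v : 'rV[K]_p) : (line v <= v)%MS.
Proof. by apply/row_subP => i; rewrite rowK. Qed.
Lemma sub_line p (v : 'rV[K]_p) : (0 < p)%N -> (v <= line v)%MS.
Proof. by move=> p0; have := row_sub (Ordinal p0) (line v); rewrite rowK. Qed.

Lemma main_result m (sigma : A -> 'M[K]_m) : is_module sigma -> simple_module sigma ->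
  (forall J, is_radical rho J -> quotient_iso rho J sigma) /\
  (forall S, is_socle rho S -> submodule_iso rho S sigma).
Proof.
move=> Hsig [m0 Hsimp].
have H10 : (1%:M : 'M[K]_m) != 0 by rewrite -mxrank_eq0 mxrank1 -lt0n m0.
have [w [_ wnz wS]] := soc_exists HI Huniq Hsig H10 (fun a => submx1 _).
have subw : submodule sigma (line w).
  move=> a; apply/row_subP => i; rewrite row_mul rowK.
  have [l Hl] := decomp a; rewrite (soc_act Hsig wS Hl).
  by apply: scalemx_sub; apply: sub_line.
have Lw1 : (1%:M <= line w)%MS.
  case: (Hsimp _ subw) => [/andP [H _]|/andP [_ H]] //.
  by move: wnz; rewrite -submx0 => /negP []; apply: submx_trans (sub_line _ m0) H.
have Em : m = 1%N.
  apply/eqP; rewrite eqn_leq m0 andbT.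
  have := mxrankS Lw1; rewrite mxrank1 => H; apply: leq_trans H _.
  apply: leq_trans (mxrankS (line_sub w)) _; exact: rank_leq_row.
have sig0 i : i \in I -> sigma i = 0.
  move=> Hi; have /submxP [D HD] := submx_trans Lw1 (line_sub w).
  by rewrite -[sigma i]mul1mx HD -mulmxA wS // mulmx0.
subst m.
have sigE a l : a - l *: 1 \in I -> sigma a = l%:M.
  move=> Hl.
  by rewrite (phi_split Hsig a l) sig0 // addr0 scalemx1.
have [fT [nzf Tf]] := T_exists.
have [sS [SS nzS HS]] := soc_gen Tf nzf.
have modf a : rho a *m fT = fT *m sigma a.
  have [l Hl] := decomp a.
  by rewrite (top_act Hrho Tf Hl) (sigE _ _ Hl) mul_mx_scalar.
split.
- move=> J HJ; have rf : \rank fT = 1%N.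
    by apply/eqP; rewrite eqn_leq rank_leq_col lt0n mxrank_eq0.
  set U0 := kermx fT.
  have rU0 : \rank U0 = n.-1 by rewrite /U0 mxrank_ker rf subn1.
  have U0f : U0 *m fT = 0 by apply: mulmx_ker.
  have maxU0 : maximal_submodule rho U0.
    split.
    - move=> a; apply/sub_kermxP; rewrite -mulmxA modf mulmxA U0f mul0mx //.
    - apply/negP => /sub_kermxP; rewrite mul1mx => E; by rewrite E eqxx in nzf.
    - move=> V HV U0V.
      have [le|gt] := leqP (\rank V) (\rank U0).
        left; apply/andP; split => //.
        by rewrite -(mxrank_leqif_sup U0V).2 eqn_leq le mxrankS.
      right; rewrite sub1mx /row_full eqn_leq rank_leq_row /=.
      by move: gt; rewrite rU0 (prednK n_gt0).
  have allmax U : maximal_submodule rho U -> (U0 <= U)%MS.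
    move=> [HU notfull Hmax].
    have rU : (\rank U < n)%N.
      rewrite ltn_neqAle rank_leq_row andbT; apply: contra notfull => /eqP E.
      by rewrite sub1mx /row_full E.
    have [g [nzg Ug Tg]] := top_exists HI Huniq Hrho HU rU.
    have [mu Emu] := topdim Tf Tg nzf.
    have mu0 : mu != 0 by apply: contra nzg => /eqP mu0; rewrite Emu mu0 scale0r.
    have UU0 : (U <= U0)%MS.
      apply/sub_kermxP; apply: (@scalerI _ _ mu) => //.
      by rewrite scaler0 scalemxAr -Emu.
    have [subU0 nfU0 _] := maxU0.
    case: (Hmax U0 subU0 UU0) => [/andP [] //|H].
    by case/negP: nfU0.
  exists fT; split => //; first by rewrite /row_full rf.
  apply/andP; split.
    apply/row_subP => i; apply/(HJ _).2 => U HU.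
    exact: submx_trans (row_sub i U0) (allmax U HU).
  apply/row_subP => i; apply: ((HJ (row i J)).1 (row_sub i J)); exact: maxU0.
- move=> S [HS1 [Us [HUs ES]]].
  set L := line sS.
  have sSL : (sS <= L)%MS by apply: sub_line; exact: n_gt0.
  have LsS : (L <= sS)%MS by apply: line_sub.
  have socU (V : 'M[K]_n) : submodule rho V -> ~~ (V == (0 : 'M[K]_n))%MS -> (L <= V)%MS.
    move=> HV nV.
    have V0 : V != 0 by apply: contra nV => /eqP ->; rewrite !sub0mx.
    have [v [vV nzv Sv]] := soc_exists HI Huniq Hrho V0 HV.
    have [mu Emu] := socdim Tf nzf SS nzS HS Sv.
    have mu0 : mu != 0 by apply: contra nzv => /eqP mu0; rewrite Emu mu0 scale0r.
    apply: submx_trans LsS _.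
    have -> : sS = mu^-1 *: v by rewrite Emu scalerA mulVf // scale1r.
    exact: scalemx_sub.
  have subL : submodule rho L.
    move=> a; apply/row_subP => i; rewrite row_mul rowK.
    have [l Hl] := decomp a; rewrite (soc_act Hrho SS Hl).
    exact: scalemx_sub.
  have nL : ~~ (L == (0 : 'M[K]_n))%MS.
    apply/negP => /andP [H _]; move: nzS; rewrite -submx0 => /negP []; exact: submx_trans H.
  have simpL : simple_submodule rho L.
    split => // V HV VL.
    have [V0|nV] := boolP (V == (0 : 'M[K]_n))%MS; first by left.
    right; apply/andP; split => //; exact: socU.
  have SL : (S <= L)%MS.
    move: ES => /andP [ES _]; apply: submx_trans ES _.
    have UL U : U \in Us -> (U <= L)%MS.
      move=> /HUs [HU nU Hmin].
      case: (Hmin L subL (socU U HU nU)) => [/andP [H _]|/andP [_ H]] //.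
      by case/negP: nL; apply/andP; split => //; exact: sub0mx.
    elim: Us {HUs} UL => [|U Us' IH] UL; first by rewrite big_nil sub0mx.
    rewrite big_cons addsmx_sub UL ?mem_head //=; apply: IH => V HV.
    by apply: UL; rewrite in_cons HV orbT.
  have LS : (L <= S)%MS by apply: HS1.
  have SsS : (S <= sS)%MS by apply: submx_trans LsS.
  have sSS : (sS <= S)%MS by apply: submx_trans LS.
  have [j Hj] := nz_entry_r nzS.
  pose g : 'cV[K]_n := (sS 0 j)^-1 *: delta_mx j 0.
  have sSg : sS *m g = 1%:M.
    by rewrite /g -scalemxAr -colE [col j sS]mx11_scalar mxE scale_scalar_mx mulVf.
  exists g; split.
  + move=> a; have /submxP [D ->] := SsS.
    have [l Hl] := decomp a.
    rewrite -mulmxA mulmxBr mulmxA (soc_act Hrho SS Hl) mulmxA sSg (sigE _ _ Hl).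
    by rewrite -scalemxAl sSg mul1mx scalemx1 subrr mulmx0.
  + have := eqmx_rank (A := S) (B := sS) (introT andP (conj SsS sSS)).
    move=> ->; apply/eqP; rewrite eqn_leq rank_leq_row lt0n mxrank_eq0 //.
  + rewrite submx1 /=; have /submxP [E HE] := sSS.
    by rewrite -sSg HE -mulmxA; apply: submxMl.
Qed.

End Main.

Unset Implicit Arguments.
Theorem proposition5p1 (K : closedFieldType) (A : falgType K)
  (n : nat) (rho : A -> 'M[K]_n) :
  local_algebra A ->
  is_module rho ->
  indecomposable rho ->
  quasi_Frobenius (EndRing rho) ->
  forall (m : nat) (sigma : A -> 'M[K]_m),
    is_module sigma -> simple_module sigma ->
    (forall J : 'M[K]_n, is_radical rho J -> quotient_iso rho J sigma) /\
    (forall S : 'M[K]_n, is_socle rho S -> submodule_iso rho S sigma).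
Proof.
move=> [I [HI Huniq]] Hrho Hind HQF m sigma Hsig Hsimp.
exact: (main_result HI Huniq Hrho Hind HQF Hsig Hsimp).
Qed.
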